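(* Let $N,M_t,M_r$ be positive integers, $P_0>0$, $\sigma^2>0$, $\alpha\in\mathbb C$, $L>0$, and $\theta,\theta_1,\theta_2\in\mathbb R$. Let $\mathbf G_t=\sqrt{L}\,\mathbf a(\theta_2)\mathbf c^T(\theta_1)\in\mathbb C^{N\times M_t}$ and $\mathbf G_r=\sqrt{L}\,\mathbf b(\theta_1)\mathbf a^T(\theta_2)\in\mathbb C^{M_r\times N}$. Then $\mathrm{SNR}_1^\star:=\max_{\mathbf R,\mathbf\Phi}\mathrm{SNR}_1(\mathbf R,\mathbf\Phi)=\frac{P_0|\alpha|^2L^2M_tM_rN^4}{\sigma^2}$ and $\mathrm{SNR}_2^\star:=\max_{\mathbf R,\mathbf\Phi}\mathrm{SNR}_2(\mathbf R,\mathbf\Phi)=\frac{P_0|\alpha|^2LM_tM_rN^2}{\sigma^2}$, where the maxima are over all positive semidefinite $\mathbf R\in\mathbb C^{M_t\times M_t}$ with $\mathrm{tr}(\mathbf R)\le P_0$ and all $\mathbf\Phi=\mathrm{diag}(e^{j\phi_1},\dots,e^{j\phi_N})$, $\phi_n\in\mathbb R$. In particular these grow proportionally to $N^4$ and $N^2$, respectively.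
   Context: $j=\sqrt{-1}$. Fix $\hat d>0$, $\lambda>0$. For a positive integer $K$, $\mathbf s_K(\theta)\in\mathbb C^K$ has $k$-th entry $e^{j\pi(2k-K-1)\hat d\sin\theta/\lambda}$. Set $\mathbf a(\theta)=\mathbf s_N(\theta)$, $\mathbf b(\theta)=\mathbf s_{M_r}(\theta)$, $\mathbf c(\theta)=\mathbf s_{M_t}(\theta)$. Define $\mathrm{SNR}_1(\mathbf R,\mathbf\Phi)=\frac{|\alpha|^2\|\mathbf G_r\mathbf\Phi^T\mathbf a(\theta)\|^2\,\mathbf a^T(\theta)\mathbf\Phi\mathbf G_t\mathbf R\mathbf G_t^H\mathbf\Phi^H\mathbf a^*(\theta)}{\sigma^2}$, $\mathrm{SNR}_2(\mathbf R,\mathbf\Phi)=\frac{|\alpha|^2\|\mathbf b(\theta)\|^2\,\mathbf a^T(\theta)\mathbf\Phi\mathbf G_t\mathbf R\mathbf G_t^H\mathbf\Phi^H\mathbf a^*(\theta)}{\sigma^2}$. *)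

(* Defs.v *)
From mathcomp Require Import all_boot all_order all_algebra.
From mathcomp Require Import all_classical all_reals all_analysis.
From mathcomp Require Import complex.
Set Implicit Arguments. Unset Strict Implicit. Unset Printing Implicit Defensive.
Import Order.TTheory GRing.Theory Num.Theory.
Local Open Scope ring_scope.

Section Defs.
Variable R : realType.
Local Notation C := R[i].

Definition rC (x : R) : C := Complex x 0.

Definition expj (x : R) : C := Complex (cos x) (sin x).

Definition herm m n (A : 'M[C]_(m, n)) : 'M[C]_(n, m) := (map_mx Num.conj A)^T.

(* steering vector s_K(theta), entry k (1-based k = i+1):
   exp(j pi (2k-K-1) dhat sin(theta) / lambda) *)
Definition steer (dhat lambda : R) (K : nat) (theta : R) : 'cV[C]_K :=
  \col_(i < K) expj (pi * (((2 * i + 1)%:R : R) - K%:R) * dhat * sin theta / lambda).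

Definition sqnorm n (v : 'cV[C]_n) : C := \sum_(i < n) `|v i 0| ^+ 2.

Definition psd n (A : 'M[C]_n) : Prop :=
  herm A = A /\ forall x : 'cV[C]_n, 0 <= (herm x *m A *m x) 0 0.

Definition phase_mx N (phi : 'I_N -> R) : 'M[C]_N := diag_mx (\row_n expj (phi n)).

Definition feasible Mt N (P0 : R) (Rm : 'M[C]_Mt) (Phi : 'M[C]_N) : Prop :=
  psd Rm /\ \tr Rm <= rC P0 /\ exists phi : 'I_N -> R, Phi = phase_mx phi.

Definition tx_gain N Mt (a : 'cV[C]_N) (Phi : 'M[C]_N) (Gt : 'M[C]_(N, Mt))
    (Rm : 'M[C]_Mt) : C :=
  (a^T *m Phi *m Gt *m Rm *m herm Gt *m herm Phi *m map_mx Num.conj a) 0 0.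

Definition SNR1 N Mt Mr (dhat lambda theta : R) (alpha : C) (sigma2 : R)
    (Gt : 'M[C]_(N, Mt)) (Gr : 'M[C]_(Mr, N)) (Rm : 'M[C]_Mt) (Phi : 'M[C]_N) : C :=
  let a := steer dhat lambda N theta in
  `|alpha| ^+ 2 * sqnorm (Gr *m Phi^T *m a) * tx_gain a Phi Gt Rm / rC sigma2.

Definition SNR2 N Mt Mr (dhat lambda theta : R) (alpha : C) (sigma2 : R)
    (Gt : 'M[C]_(N, Mt)) (Rm : 'M[C]_Mt) (Phi : 'M[C]_N) : C :=
  let a := steer dhat lambda N theta in
  `|alpha| ^+ 2 * sqnorm (steer dhat lambda Mr theta) * tx_gain a Phi Gt Rm / rC sigma2.

Definition is_max_value Mt N (P0 : R) (f : 'M[C]_Mt -> 'M[C]_N -> C) (v : C) : Prop :=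
  (forall Rm Phi, feasible P0 Rm Phi -> f Rm Phi <= v) /\
  (exists Rm Phi, feasible P0 Rm Phi /\ f Rm Phi = v).

End Defs.

(* Main.v *)
Require Import Defs.
From mathcomp Require Import all_boot all_order all_algebra.
From mathcomp Require Import all_classical all_reals all_analysis.
From mathcomp Require Import complex ring.
Import Order.TTheory GRing.Theory Num.Theory.
Local Open Scope ring_scope.
Section S.
Variable R : realType.
Local Notation C := R[i].
Local Notation cj := (map_mx (@Num.conj C)).

Lemma conj_rC (x : R) : (rC x)^* = rC x.
Proof. by rewrite /rC; apply/eqP; rewrite eq_complex /= oppr0 !eqxx. Qed.
Lemma rCM (x y : R) : rC (x * y) = rC x * rC y.
Proof. exact: (rmorphM (real_complex R)). Qed.
Lemma rCV (x : R) : rC (x^-1) = (rC x)^-1.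
Proof. exact: (fmorphV (real_complex R)). Qed.
Lemma rCX (x : R) n : rC (x ^+ n) = (rC x) ^+ n.
Proof. exact: (rmorphXn (real_complex R)). Qed.
Lemma rCn n : rC (n%:R : R) = n%:R.
Proof. exact: (rmorph_nat (real_complex R)). Qed.
Lemma rC_ge0 (x : R) : 0 <= x -> 0 <= rC x.
Proof. by move=> h; rewrite lecE /= eqxx. Qed.
Lemma rC_le (x y : R) : x <= y -> rC x <= rC y.
Proof. by move=> h; rewrite lecE /= eqxx. Qed.

Lemma expj_norm (x : R) : `|expj x| = 1.
Proof. by rewrite normc_def /= cos2Dsin2 sqrtr1. Qed.
Lemma expjD (x y : R) : expj x * expj y = expj (x + y).
Proof. by rewrite /expj; apply/eqP; rewrite eq_complex /= cosD sinD; apply/andP; split; apply/eqP; ring. Qed.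
Lemma expj0 : expj (0:R) = 1.
Proof. by rewrite /expj cos0 sin0. Qed.
Lemma expj_conj (x : R) : expj x * (expj x)^* = 1.
Proof. by rewrite -normCK expj_norm expr1n. Qed.

Lemma herm_mul m n p (A : 'M[C]_(m, n)) (B : 'M[C]_(n, p)) :
  herm (A *m B) = herm B *m herm A.
Proof. by rewrite /herm map_mxM trmx_mul. Qed.
Lemma herm_tr m n (A : 'M[C]_(m, n)) : herm A^T = cj A.
Proof. by apply/matrixP => i j; rewrite !mxE. Qed.
Lemma herm_scale m n k (A : 'M[C]_(m, n)) : herm (k *: A) = k^* *: herm A.
Proof. by apply/matrixP => i j; rewrite !mxE rmorphM. Qed.
Lemma herm_cj m n (A : 'M[C]_(m, n)) : herm (cj A) = A^T.
Proof. by apply/matrixP => i j; rewrite !mxE conjCK. Qed.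

Lemma steer_entry (d l : R) K (t : R) (i : 'I_K) : `|steer d l K t i 0| = 1.
Proof. by rewrite mxE expj_norm. Qed.

Lemma sqnorm_steer (d l : R) K (t : R) : sqnorm (steer d l K t) = K%:R.
Proof.
rewrite /sqnorm (eq_bigr (fun _ => 1)); first by rewrite sumr_const card_ord.
by move=> i _; rewrite steer_entry expr1n.
Qed.

Lemma sqnorm_scale n k (v : 'cV[C]_n) : sqnorm (k *: v) = k * k^* * sqnorm v.
Proof.
rewrite /sqnorm mulr_sumr; apply: eq_bigr => i _.
by rewrite mxE normrM exprMn normCK.
Qed.


Lemma Xeq N Mt (a a2 : 'cV[C]_N) (c : 'cV[C]_Mt) (Phi : 'M[C]_N) k :
  a^T *m Phi *m (k *: (a2 *m c^T)) = (k * (a^T *m Phi *m a2) 0 0) *: c^T.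
Proof. by rewrite -scalemxAr mulmxA {1}[a^T *m Phi *m a2]mx11_scalar mul_scalar_mx scalerA. Qed.

Lemma tx_eq N Mt (a a2 : 'cV[C]_N) (c : 'cV[C]_Mt) (Phi : 'M[C]_N) k Rm :
  let s := k * (a^T *m Phi *m a2) 0 0 in
  tx_gain a Phi (k *: (a2 *m c^T)) Rm = s * s^* * (herm (cj c) *m Rm *m cj c) 0 0.
Proof.
move=> s; rewrite /tx_gain.
set Gt := k *: _.
have E : a^T *m Phi *m Gt *m Rm *m herm Gt *m herm Phi *m cj a
   = (a^T *m Phi *m Gt *m Rm) *m (herm Gt *m herm Phi *m cj a) by rewrite !mulmxA.
have H : herm Gt *m herm Phi *m cj a = herm (a^T *m Phi *m Gt)
  by rewrite !herm_mul herm_tr mulmxA.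
rewrite E H Xeq -/s herm_scale herm_tr herm_cj -!scalemxAl -scalemxAr scalerA mxE.
by [].
Qed.

Lemma Gr_eq N Mr (a a2 : 'cV[C]_N) (b : 'cV[C]_Mr) (Phi : 'M[C]_N) k :
  (k *: (b *m a2^T)) *m Phi^T *m a = (k * (a^T *m Phi *m a2) 0 0) *: b.
Proof.
have H : a2^T *m (Phi^T *m a) = (a^T *m Phi *m a2)^T by rewrite mulmxA !trmx_mul trmxK mulmxA.
rewrite -!scalemxAl -!mulmxA H {1}[a^T *m Phi *m a2]mx11_scalar tr_scalar_mx.
by rewrite mul_mx_scalar scalerA mulmxA.
Qed.

Lemma s_eq N (a a2 : 'cV[C]_N) phi :
  (a^T *m phase_mx phi *m a2) 0 0 = \sum_k a k 0 * expj (phi k) * a2 k 0.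
Proof.
rewrite /phase_mx mul_mx_diag mxE; apply: eq_bigr => k _; by rewrite !mxE.
Qed.

Lemma Qmx n (A : 'M[C]_n) (y : 'cV[C]_n) :
  (herm y *m A *m y) 0 0 = \sum_i \sum_j (y i 0)^* * A i j * y j 0.
Proof.
rewrite mxE exchange_big; apply: eq_bigr => j _; rewrite mxE mulr_suml.
by apply: eq_bigr => i _; rewrite !mxE.
Qed.

Lemma sum_d {n} (F : 'I_n -> C) i : \sum_l F l * (l == i)%:R = F i.
Proof.
rewrite (bigD1 i) //= eqxx mulr1 big1 ?addr0 // => l /negbTE ->; by rewrite mulr0.
Qed.

Lemma Qpair n (A : 'M[C]_n) (a b : C) i j :
  (herm (\col_k (a * (k == i)%:R - b * (k == j)%:R)) *m A
     *m (\col_k (a * (k == i)%:R - b * (k == j)%:R))) 0 0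
  = a^* * (a * A i i - b * A i j) - b^* * (a * A j i - b * A j j).
Proof.
rewrite Qmx.
rewrite (eq_bigr (fun k => (a^* * (k == i)%:R - b^* * (k == j)%:R) * (a * A k i - b * A k j))); last first.
  move=> k _; rewrite -(sum_d (fun l => A k l) i) -(sum_d (fun l => A k l) j).
  rewrite mulr_sumr mulr_sumr -sumrB mulr_sumr; apply: eq_bigr => l _.
  rewrite !mxE rmorphB !rmorphM !rmorph_nat; ring.
rewrite (eq_bigr (fun k => (a^* * (a * A k i - b * A k j)) * (k == i)%:R
   - (b^* * (a * A k i - b * A k j)) * (k == j)%:R)); last by move=> k _; ring.
by rewrite sumrB !sum_d.
Qed.

Lemma quad_le n (A : 'M[C]_n) (x : 'cV[C]_n) :
  psd A -> (forall k, `|x k 0| = 1) ->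
  (herm x *m A *m x) 0 0 <= n%:R * \tr A.
Proof.
move=> [_ hA] hx.
have xx : forall k, (x k 0)^* * x k 0 = 1.
  by move=> k; rewrite mulrC -normCK hx expr1n.
set y := fun i j => \col_k (x i 0 * (k == i)%:R - x j 0 * (k == j)%:R).
have h0 : 0 <= \sum_i \sum_j (herm (y i j) *m A *m y i j) 0 0.
  by apply: sumr_ge0 => i _; apply: sumr_ge0 => j _; apply: hA.
have E : \sum_i \sum_j (herm (y i j) *m A *m y i j) 0 0
   = 2%:R * (n%:R * \tr A - (herm x *m A *m x) 0 0).
  rewrite (eq_bigr (fun i => \sum_j (A i i + A j j - (x i 0)^* * A i j * x j 0
              - (x j 0)^* * A j i * x i 0))); last first.
    move=> i _; apply: eq_bigr => j _; rewrite /y Qpair.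
    have := xx i; have := xx j; move=> e1 e2.
    transitivity ((x i 0)^* * x i 0 * A i i + (x j 0)^* * x j 0 * A j j
       - (x i 0)^* * A i j * x j 0 - (x j 0)^* * A j i * x i 0); first by ring.
    by rewrite e1 e2 !mul1r.
  rewrite Qmx /mxtrace.
  rewrite (eq_bigr (fun i => (\sum_j (A i i + A j j)) - \sum_j (x i 0)^* * A i j * x j 0
        - \sum_j (x j 0)^* * A j i * x i 0)); last first.
    by move=> i _; rewrite -!sumrB.
  have e1 : \sum_(i < n) \sum_(j < n) (A i i + A j j) = 2%:R * (n%:R * \sum_i A i i).
    rewrite (eq_bigr (fun i => A i i *+ n + \sum_j A j j)); last first.
      by move=> i _; rewrite big_split /= sumr_const card_ord.
    rewrite big_split /= sumr_const card_ord ?sumrMnl.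
    move: (\sum_(i < n) A i i) => T; rewrite -mulr_natl; ring.
  have e2 : \sum_(i < n) \sum_(j < n) (x j 0)^* * A j i * x i 0
          = \sum_(i < n) \sum_(j < n) (x i 0)^* * A i j * x j 0 by rewrite exchange_big.
  rewrite !sumrB e1 e2.
  move: (\sum_(i < n) A i i) (\sum_(i < n) \sum_(j < n) (x i 0)^* * A i j * x j 0) => T Q.
  ring.
have h1 : 0 <= n%:R * \tr A - (herm x *m A *m x) 0 0.
  by move: h0; rewrite E pmulr_rge0 // ltr0n.
by rewrite -subr_ge0.
Qed.


Lemma s_norm N (a a2 : 'cV[C]_N) phi :
  (forall k, `|a k 0| = 1) -> (forall k, `|a2 k 0| = 1) ->
  `|(a^T *m phase_mx phi *m a2) 0 0| <= N%:R.
Proof.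
move=> ha ha2; rewrite s_eq; apply: le_trans (ler_norm_sum _ _ _) _.
rewrite (eq_bigr (fun _ => 1)) ?sumr_const ?card_ord // => k _.
by rewrite !normrM ha ha2 expj_norm !mulr1.
Qed.

Lemma S_bound N (s : C) : `|s| <= N%:R -> 0 <= s * s^* /\ s * s^* <= N%:R ^+ 2.
Proof.
move=> h; rewrite -normCK; split; first exact: exprn_ge0.
by rewrite !expr2; apply: ler_pM.
Qed.

Lemma rank1_Q n p (c x : 'cV[C]_n) :
  (herm x *m (p *: (cj c *m c^T)) *m x) 0 0
  = p * ((\sum_i c i 0 * x i 0)^* * (\sum_i c i 0 * x i 0)).
Proof.
rewrite Qmx rmorph_sum mulr_suml mulr_sumr; apply: eq_bigr => i _.
rewrite mulr_sumr mulr_sumr; apply: eq_bigr => j _.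
rewrite !mxE big_ord1 !mxE rmorphM; ring.
Qed.

Lemma rank1_psd n (r : R) (c : 'cV[C]_n) : 0 <= r -> psd (rC r *: (cj c *m c^T)).
Proof.
move=> hr; split.
  apply/matrixP => i j; rewrite !mxE !big_ord1 !mxE !rmorphM /= conj_rC conjCK; ring.
move=> x; rewrite rank1_Q; apply: mulr_ge0; first exact: rC_ge0.
by rewrite mulrC -normCK exprn_ge0.
Qed.

Lemma rank1_tr n p (c : 'cV[C]_n) : (forall k, `|c k 0| = 1) ->
  \tr (p *: (cj c *m c^T)) = p * n%:R.
Proof.
move=> hc; rewrite /mxtrace (eq_bigr (fun _ => p)) ?sumr_const ?card_ord ?mulr_natr //.
move=> i _; rewrite !mxE !big_ord1 !mxE [_^* * _]mulrC -normCK hc expr1n mulr1 //.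
Qed.

Lemma rank1_q n p (c : 'cV[C]_n) : (forall k, `|c k 0| = 1) ->
  (herm (cj c) *m (p *: (cj c *m c^T)) *m cj c) 0 0 = p * (n%:R * n%:R).
Proof.
move=> hc; rewrite rank1_Q (eq_bigr (fun _ => 1)) ?sumr_const ?card_ord ?conjC_nat //.
move=> i _; rewrite !mxE -normCK hc expr1n //.
Qed.

End S.

Theorem proposition2 (R : realType) (N Mt Mr : nat)
  (P0 sigma2 L dhat lambda theta theta1 theta2 : R) (alpha : R[i]) :
  (0 < N)%N -> (0 < Mt)%N -> (0 < Mr)%N ->
  0 < P0 -> 0 < sigma2 -> 0 < L -> 0 < dhat -> 0 < lambda ->
  let Gt : 'M[R[i]]_(N, Mt) :=
    rC (Num.sqrt L) *: (steer dhat lambda N theta2 *m (steer dhat lambda Mt theta1)^T) in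
  let Gr : 'M[R[i]]_(Mr, N) :=
    rC (Num.sqrt L) *: (steer dhat lambda Mr theta1 *m (steer dhat lambda N theta2)^T) in
  is_max_value P0 (SNR1 dhat lambda theta alpha sigma2 Gt Gr)
    (rC (P0 * L ^+ 2 * (Mt * Mr * N ^ 4)%:R / sigma2) * `|alpha| ^+ 2) /\
  is_max_value P0 (SNR2 Mr dhat lambda theta alpha sigma2 Gt)
    (rC (P0 * L * (Mt * Mr * N ^ 2)%:R / sigma2) * `|alpha| ^+ 2).
Proof.
move=> hN hMt hMr hP0 hs hL hd hl Gt Gr.
set a := steer dhat lambda N theta.
set a2 := steer dhat lambda N theta2.
set c := steer dhat lambda Mt theta1.
set b := steer dhat lambda Mr theta1.
have ha : forall k, `|a k 0| = 1 by move=> i; apply: steer_entry.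
have ha2 : forall k, `|a2 k 0| = 1 by move=> i; apply: steer_entry.
have hc : forall k, `|c k 0| = 1 by move=> i; apply: steer_entry.
have hcj : forall k, `|map_mx (@Num.conj _) c k 0| = 1.
  by move=> k; rewrite mxE norm_conjC hc.
set k := rC (Num.sqrt L).
have kk0 : k * k = rC L by rewrite -rCM -expr2 sqr_sqrtr ?ltW.
have kk : forall s0, (k * s0) * (k * s0)^* = rC L * (s0 * s0^*).
  move=> s0; rewrite rmorphM /= conj_rC -kk0 -/k; ring.
pose S0 (phi : 'I_N -> R) := (a^T *m phase_mx phi *m a2) 0 0 * ((a^T *m phase_mx phi *m a2) 0 0)^*.
pose q (Rm : 'M[R[i]]_Mt) := (herm (map_mx (@Num.conj _) c) *m Rm *m map_mx (@Num.conj _) c) 0 0.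
have F1 : forall Rm phi, SNR1 dhat lambda theta alpha sigma2 Gt Gr Rm (phase_mx phi)
   = `|alpha| ^+ 2 * (rC L * S0 phi * Mr%:R) * (rC L * S0 phi * q Rm) / rC sigma2.
  move=> Rm phi; rewrite /SNR1 /Gr /Gt Gr_eq tx_eq sqnorm_scale sqnorm_steer !kk //.
have F2 : forall Rm phi, SNR2 Mr dhat lambda theta alpha sigma2 Gt Rm (phase_mx phi)
   = `|alpha| ^+ 2 * Mr%:R * (rC L * S0 phi * q Rm) / rC sigma2.
  move=> Rm phi; rewrite /SNR2 /Gt tx_eq sqnorm_steer !kk //.
have hsC : rC sigma2 != 0.
  by apply/eqP => h; move: (lt0r_neq0 hs); rewrite (_ : sigma2 = 0) ?eqxx //; case: h.
have hMtC : (Mt%:R : R[i]) != 0 by rewrite pnatr_eq0 -lt0n.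
have hMtR : (Mt%:R : R) != 0 by rewrite pnatr_eq0 -lt0n.
have Lge : 0 <= rC L by apply: rC_ge0; apply: ltW.
have sge : 0 <= (rC sigma2)^-1 by rewrite invr_ge0; apply: rC_ge0; apply: ltW.
have age : 0 <= `|alpha| ^+ 2 by apply: exprn_ge0.
have BND : forall Rm phi, feasible P0 Rm (phase_mx phi) ->
   [/\ 0 <= S0 phi, S0 phi <= N%:R ^+ 2, 0 <= q Rm & q Rm <= Mt%:R * rC P0].
  move=> Rm phi [hpsd [htr _]].
  have [Sge Sle] := @S_bound _ _ _ (@s_norm _ _ a a2 phi ha ha2).
  split => //; first exact: hpsd.2.
  apply: le_trans (@quad_le _ _ _ _ hpsd hcj) _; apply: ler_wpM2l => //; exact: ler0n.
pose u (K : nat) (t : R) := fun (i : 'I_K) =>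
  pi * (((2 * i + 1)%:R : R) - K%:R) * dhat * sin t / lambda.
pose phi0 := fun i => - (u N theta i + u N theta2 i).
have E1 : forall x y : R, expj x * expj (- (x + y)) * expj y = 1.
  by move=> x y; rewrite !expjD (_ : x + - (x + y) + y = 0) ?expj0 //; ring.
have s0N : (a^T *m phase_mx phi0 *m a2) 0 0 = N%:R.
  rewrite s_eq (eq_bigr (fun _ => 1)) ?sumr_const ?card_ord // => i _.
  rewrite /a /a2 !mxE; exact: (E1 (u N theta i) (u N theta2 i)).
have S0N : S0 phi0 = N%:R * N%:R by rewrite /S0 s0N conjC_nat.
pose Rm0 := rC (P0 / Mt%:R) *: (map_mx (@Num.conj _) c *m c^T).
have q0 : q Rm0 = rC (P0 / Mt%:R) * (Mt%:R * Mt%:R) by apply: rank1_q.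
have feas0 : feasible P0 Rm0 (phase_mx phi0).
  split; first by apply: rank1_psd; apply: divr_ge0; [apply: ltW | apply: ler0n].
  split; last by exists phi0.
  by rewrite rank1_tr // -rCn -rCM divfK.
split; split.
- move=> Rm Phi [hpsd [htr [phi hPhi]]]; rewrite hPhi F1.
  have [Sge Sle qge qle] : [/\ 0 <= S0 phi, S0 phi <= N%:R ^+ 2, 0 <= q Rm & q Rm <= Mt%:R * rC P0].
    by apply: BND; split => //; split => //; exists phi.
  pose Z := `|alpha| ^+ 2 * rC L ^+ 2 * Mr%:R / rC sigma2.
  have -> : `|alpha| ^+ 2 * (rC L * S0 phi * Mr%:R) * (rC L * S0 phi * q Rm) / rC sigma2
     = Z * (S0 phi * S0 phi * q Rm) by rewrite /Z; ring.
  have -> : rC (P0 * L ^+ 2 * (Mt * Mr * N ^ 4)%:R / sigma2) * `|alpha| ^+ 2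
     = Z * (N%:R ^+ 2 * N%:R ^+ 2 * (Mt%:R * rC P0)).
    rewrite /Z !rCM rCV rCn !natrM. ring.
  apply: ler_wpM2l.
    rewrite /Z; apply: mulr_ge0 => //; apply: mulr_ge0; last exact: ler0n.
    by apply: mulr_ge0 => //; apply: exprn_ge0.
  by apply: ler_pM; [apply: mulr_ge0 | | apply: ler_pM | ].
- exists Rm0, (phase_mx phi0); split => //.
  rewrite F1 S0N q0 !rCM !rCV !rCn !natrM; field.
  by rewrite hsC hMtC.
- move=> Rm Phi [hpsd [htr [phi hPhi]]]; rewrite hPhi F2.
  have [Sge Sle qge qle] : [/\ 0 <= S0 phi, S0 phi <= N%:R ^+ 2, 0 <= q Rm & q Rm <= Mt%:R * rC P0].
    by apply: BND; split => //; split => //; exists phi.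
  pose Z := `|alpha| ^+ 2 * rC L * Mr%:R / rC sigma2.
  have -> : `|alpha| ^+ 2 * Mr%:R * (rC L * S0 phi * q Rm) / rC sigma2
     = Z * (S0 phi * q Rm) by rewrite /Z; ring.
  have -> : rC (P0 * L * (Mt * Mr * N ^ 2)%:R / sigma2) * `|alpha| ^+ 2
     = Z * (N%:R ^+ 2 * (Mt%:R * rC P0)).
    rewrite /Z !rCM rCV rCn !natrM; ring.
  apply: ler_wpM2l.
    rewrite /Z; apply: mulr_ge0 => //; apply: mulr_ge0; last exact: ler0n.
    by apply: mulr_ge0.
  by apply: ler_pM.
- exists Rm0, (phase_mx phi0); split => //.
  rewrite F2 S0N q0 !rCM !rCV !rCn !natrM; field.
  by rewrite hsC hMtC.
Qed.
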